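(* In the setting of the context, define functors $\bar Q,\bar Q':\mathcal A\to\mathcal B$ by the equalizers $q:\bar Q\to PC$ of $(\theta^lP)\circ(Pi)$ and $(\theta^rP)\circ(Pi)$ (both $PC\to SPQP$), and $q':\bar Q'\to DP$ of $(P\omega^l)\circ(jP)$ and $(P\omega^r)\circ(jP)$ (both $DP\to PQPR$). Then (1) $\bar Q$ and $\bar Q'$ are naturally isomorphic; they can be chosen equal with $(jP)\circ q'=(Pi)\circ q$; and (2) $\bar Q$ carries the structure of a $\mathbb D$-$\mathbb C$ bicomodule functor, with right $\mathbb C$-coaction $\bar c$ determined by $(qC)\circ\bar c=(P\Delta^C)\circ q$ and left $\mathbb D$-coaction $\bar d$ determined by $(Dq')\circ\bar d=(\Delta^DP)\circ q'$.
   Context: Setting: $\mathcal A,\mathcal B$ categories with equalizers; equalizer-preserving functors $P:\mathcal A\to\mathcal B$, $Q:\mathcal B\to\mathcal A$, $R:\mathcal A\to\mathcal A$, $S:\mathcal B\to\mathcal B$; natural $r:\mathcal A\to R$, $s:\mathcal B\to S$, $w:QP\to R$, $z:PQ\to S$, $\tau:Q\to QPQ$ with (i) $r$ the equalizer of $rR,Rr$ and $s$ the equalizer of $sS,Ss$; (ii) $(QP\tau)\circ\tau=(\tau PQ)\circ\tau$; (iii) $(Qz)\circ\tau=Qs$, $(wQ)\circ\tau=rQ$. ($\circ$ vertical, juxtaposition horizontal composition; functor names denote identity transformations.) $\omega^l:=(QPw)\circ(\tau P)$, $\omega^r:=QPr$, $(C,i)$ their equalizer; $\theta^l:=(zPQ)\circ(P\tau)$,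 $\theta^r:=sPQ$, $(D,j)$ their equalizer. $\mathbb C=(C,\Delta^C,\varepsilon^C)$ is the comonad on $\mathcal A$ with $(QPi)\circ(iC)\circ\Delta^C=(\tau P)\circ i$, $r\circ\varepsilon^C=w\circ i$; $\mathbb D=(D,\Delta^D,\varepsilon^D)$ the comonad on $\mathcal B$ with $(PQj)\circ(jD)\circ\Delta^D=(P\tau)\circ j$, $s\circ\varepsilon^D=z\circ j$. A $\mathbb D$-$\mathbb C$ bicomodule functor $\bar Q:\mathcal A\to\mathcal B$ has a left $\mathbb D$-coaction $\bar Q\to D\bar Q$ and a right $\mathbb C$-coaction $\bar Q\to\bar QC$, each counital and coassociative, which commute. *)

(* Defs.v *)
Set Implicit Arguments.
Unset Strict Implicit.

Record Category := {
  Ob :> Type;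
  Hom : Ob -> Ob -> Type;
  comp : forall x y z : Ob, Hom y z -> Hom x y -> Hom x z;
  idm : forall a : Ob, Hom a a;
  comp_assoc : forall a b c d (f : Hom a b) (g : Hom b c) (h : Hom c d),
      comp h (comp g f) = comp (comp h g) f;
  comp_id_l : forall a b (f : Hom a b), comp (idm b) f = f;
  comp_id_r : forall a b (f : Hom a b), comp f (idm a) = f
}.
Arguments Hom {_} _ _.
Arguments comp {_ _ _ _} _ _.
Arguments idm {_} _.

Notation "g ∘ f" := (comp g f) (at level 40, left associativity).

Record Functor (C D : Category) := {
  fobj :> Ob C -> Ob D;
  fmap : forall a b : Ob C, Hom a b -> Hom (fobj a) (fobj b);
  fmap_id : forall a, fmap (idm a) = idm (fobj a);
  fmap_comp : forall a b c (f : Hom a b) (g : Hom b c),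
      fmap (g ∘ f) = fmap g ∘ fmap f
}.
Arguments fmap {_ _} _ {_ _} _.

Definition IdF (C : Category) : Functor C C.
Proof.
  refine {| fobj := fun a => a; fmap := fun a b f => f |}; reflexivity.
Defined.

Definition FComp {C D E : Category} (G : Functor D E) (F : Functor C D)
  : Functor C E.
Proof.
  refine {| fobj := fun a => G (F a); fmap := fun a b f => fmap G (fmap F f) |}.
  - intro a; rewrite !fmap_id; reflexivity.
  - intros a b c f g; rewrite !fmap_comp; reflexivity.
Defined.

Record NatTrans {C D : Category} (F G : Functor C D) := {
  ntc :> forall a : Ob C, Hom (F a) (G a);
  naturality : forall a b (f : Hom a b), ntc b ∘ fmap F f = fmap G f ∘ ntc a
}.

Definition IsEqualizer {C : Category} {E X Y : Ob C}
    (e : Hom E X) (f g : Hom X Y) : Prop :=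
  f ∘ e = g ∘ e /\
  forall (Z : Ob C) (h : Hom Z X), f ∘ h = g ∘ h -> exists! u : Hom Z E, e ∘ u = h.

Definition HasEqualizers (C : Category) : Prop :=
  forall (X Y : Ob C) (f g : Hom X Y), exists (E : Ob C) (e : Hom E X), IsEqualizer e f g.

Definition PreservesEqualizers {C D : Category} (F : Functor C D) : Prop :=
  forall (E X Y : Ob C) (e : Hom E X) (f g : Hom X Y),
    IsEqualizer e f g -> IsEqualizer (fmap F e) (fmap F f) (fmap F g).

Definition IsIso {C : Category} {X Y : Ob C} (f : Hom X Y) : Prop :=
  exists g : Hom Y X, g ∘ f = idm X /\ f ∘ g = idm Y.

Definition IsComonad {C : Category} (K : Functor C C)
    (Δ : NatTrans K (FComp K K)) (ε : NatTrans K (IdF C)) : Prop :=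
  (forall X, ε (K X) ∘ Δ X = idm (K X)) /\
  (forall X, fmap K (ε X) ∘ Δ X = idm (K X)) /\
  (forall X, Δ (K X) ∘ Δ X = fmap K (Δ X) ∘ Δ X).

Definition IsRightCoaction {A B : Category} (K : Functor A A)
    (Δ : NatTrans K (FComp K K)) (ε : NatTrans K (IdF A))
    (F : Functor A B) (ρ : NatTrans F (FComp F K)) : Prop :=
  (forall X, fmap F (ε X) ∘ ρ X = idm (F X)) /\
  (forall X, ρ (K X) ∘ ρ X = fmap F (Δ X) ∘ ρ X).

Definition IsLeftCoaction {A B : Category} (L : Functor B B)
    (Δ : NatTrans L (FComp L L)) (ε : NatTrans L (IdF B))
    (F : Functor A B) (λ : NatTrans F (FComp L F)) : Prop :=
  (forall X, ε (F X) ∘ λ X = idm (F X)) /\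
  (forall X, fmap L (λ X) ∘ λ X = Δ (F X) ∘ λ X).

Definition IsBicomodule {A B : Category}
    (L : Functor B B) (ΔL : NatTrans L (FComp L L)) (εL : NatTrans L (IdF B))
    (K : Functor A A) (ΔK : NatTrans K (FComp K K)) (εK : NatTrans K (IdF A))
    (F : Functor A B) (λ : NatTrans F (FComp L F)) (ρ : NatTrans F (FComp F K))
    : Prop :=
  IsLeftCoaction ΔL εL λ /\ IsRightCoaction ΔK εK ρ /\
  (forall X, λ (K X) ∘ ρ X = fmap L (ρ X) ∘ λ X).

(* Main.v *)
Require Import Defs.
From Stdlib Require Import ClassicalEpsilon.
Set Implicit Arguments.
Unset Strict Implicit.

Lemma r2 {C : Category} {a b c d : Ob C} (f : Hom b c) (g : Hom a b) (k : Hom a c) :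
  f ∘ g = k -> forall (h : Hom d a), f ∘ (g ∘ h) = k ∘ h.
Proof. intros E h. rewrite comp_assoc, E. reflexivity. Qed.
Lemma r3 {C : Category} {a b c d e : Ob C} (f : Hom c d) (g : Hom b c) (k : Hom a b) (m : Hom a d) :
  f ∘ (g ∘ k) = m -> forall (h : Hom e a), f ∘ (g ∘ (k ∘ h)) = m ∘ h.
Proof. intros E h. rewrite !comp_assoc. rewrite <- (comp_assoc k g f), E. reflexivity. Qed.
Lemma r4 {C : Category} {a b c d e x : Ob C} (f : Hom d e) (g : Hom c d) (k : Hom b c) (l : Hom a b) (m : Hom a e) :
  f ∘ (g ∘ (k ∘ l)) = m -> forall (h : Hom x a), f ∘ (g ∘ (k ∘ (l ∘ h))) = m ∘ h.
Proof. intros E h. rewrite <- E, !comp_assoc. reflexivity. Qed.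
Lemma r5 {C : Category} {a b c d e y x : Ob C} (f : Hom e y) (f0 : Hom d e) (g : Hom c d) (k : Hom b c) (l : Hom a b) (m : Hom a y) :
  f ∘ (f0 ∘ (g ∘ (k ∘ l))) = m -> forall (h : Hom x a), f ∘ (f0 ∘ (g ∘ (k ∘ (l ∘ h)))) = m ∘ h.
Proof. intros E h. rewrite <- E, !comp_assoc. reflexivity. Qed.

Ltac ra := repeat rewrite <- comp_assoc.
Ltac cb := cbn [fobj fmap FComp IdF].
Ltac nrm := cb; repeat rewrite fmap_comp; repeat rewrite fmap_id; repeat rewrite comp_id_l; repeat rewrite comp_id_r; ra.
Ltac rw E := let H := fresh "H" in pose proof E as H; cbn [fobj fmap FComp IdF] in H; repeat rewrite fmap_comp in H; repeat rewrite <- comp_assoc in H; nrm;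
  first [rewrite (r5 H) | rewrite (r4 H) | rewrite (r3 H) | rewrite (r2 H) | rewrite H]; clear H; nrm.
Ltac rwb E := rw (eq_sym E).

Lemma eq_mono {C : Category} {E X Y : Ob C} (e : Hom E X) (f g : Hom X Y) :
  IsEqualizer e f g -> forall Z (u v : Hom Z E), e ∘ u = e ∘ v -> u = v.
Proof.
  intros [H1 H2] Z u v Huv.
  destruct (H2 Z (e ∘ u)) as [w [_ Hw]].
  { rewrite !comp_assoc, H1; reflexivity. }
  transitivity w; [symmetry|]; apply Hw; auto.
Qed.

Lemma fac {C : Category} {E X Y : Ob C} (e : Hom E X) (f g : Hom X Y) :
  IsEqualizer e f g -> forall Z (h : Hom Z X), f ∘ h = g ∘ h -> {u : Hom Z E | e ∘ u = h}.
Proof.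
  intros [H1 H2] Z h Hh. apply constructive_indefinite_description.
  destruct (H2 Z h Hh) as [u [Hu _]]. exists u; exact Hu.
Qed.

Lemma eq_iso {C : Category} {E E' X Y : Ob C} (e : Hom E X) (f g : Hom X Y) (p : Hom E' E) :
  IsEqualizer e f g -> IsIso p -> IsEqualizer (e ∘ p) f g.
Proof.
  intros He [p' [Hp1 Hp2]]. pose proof He as [H1 H2]. split.
  - rewrite !comp_assoc, H1; reflexivity.
  - intros Z h Hh. destruct (H2 Z h Hh) as [u [Hu Hu']].
    exists (p' ∘ u). split.
    + rewrite <- comp_assoc, (comp_assoc u p' p), Hp2, comp_id_l; exact Hu.
    + intros v Hv. rewrite (Hu' (p ∘ v)).
      * rewrite comp_assoc, Hp1, comp_id_l; reflexivity.
      * rewrite comp_assoc; exact Hv.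
Qed.

Lemma comp_pres {A B C : Category} (G : Functor B C) (F : Functor A B) :
  PreservesEqualizers G -> PreservesEqualizers F -> PreservesEqualizers (FComp G F).
Proof. intros hG hF E X Y e f g H. apply hG, hF, H. Qed.

Lemma D_pres (B0 : Category) (D F G : Functor B0 B0) (j : NatTrans D F)
  (α β : forall Y, Hom (F Y) (G Y))
  (hα : forall a b (f : Hom a b), α b ∘ fmap F f = fmap G f ∘ α a)
  (hβ : forall a b (f : Hom a b), β b ∘ fmap F f = fmap G f ∘ β a)
  (hj : forall Y, IsEqualizer (j Y) (α Y) (β Y))
  (hF : PreservesEqualizers F) (hG : PreservesEqualizers G) : PreservesEqualizers D.
Proof.
  intros E X Y e f g He. split.
  - rewrite <- !fmap_comp. f_equal. apply He.
  - intros Z h Hh.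
    assert (Hv : fmap F f ∘ (j X ∘ h) = fmap F g ∘ (j X ∘ h)).
    { rewrite !comp_assoc, <- !naturality, <- !comp_assoc, Hh. reflexivity. }
    destruct (fac (hF _ _ _ _ _ _ He) Hv) as [v Hv'].
    assert (Hab : α E ∘ v = β E ∘ v).
    { apply (eq_mono (hG _ _ _ _ _ _ He)).
      rewrite !comp_assoc, <- hα, <- hβ, <- !comp_assoc, Hv'.
      rewrite !comp_assoc. f_equal. apply hj. }
    destruct (fac (hj E) Hab) as [u Hu].
    exists u. split.
    + apply (eq_mono (hj X)). rewrite comp_assoc, naturality, <- comp_assoc, Hu. exact Hv'.
    + intros u' Hu'. apply (eq_mono (hj E)). rewrite Hu.
      apply (eq_mono (hF _ _ _ _ _ _ He)). rewrite Hv', comp_assoc, <- naturality, <- comp_assoc, Hu'. reflexivity.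
Qed.
Theorem mainTheorem14
  (A B : Category) (hA : HasEqualizers A) (hB : HasEqualizers B)
  (P : Functor A B) (Q : Functor B A) (R : Functor A A) (S : Functor B B)
  (hP : PreservesEqualizers P) (hQ : PreservesEqualizers Q)
  (hR : PreservesEqualizers R) (hS : PreservesEqualizers S)
  (r : NatTrans (IdF A) R) (s : NatTrans (IdF B) S)
  (w : NatTrans (FComp Q P) R) (z : NatTrans (FComp P Q) S)
  (τ : NatTrans Q (FComp Q (FComp P Q)))
  (* (i) *)
  (hr : forall X : Ob A, IsEqualizer (r X) (r (R X)) (fmap R (r X)))
  (hs : forall Y : Ob B, IsEqualizer (s Y) (s (S Y)) (fmap S (s Y)))
  (* (ii) *)
  (hτ : forall Y : Ob B,
      fmap Q (fmap P (τ Y)) ∘ τ Y = τ (P (Q Y)) ∘ τ Y)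
  (* (iii) *)
  (hz : forall Y : Ob B, fmap Q (z Y) ∘ τ Y = fmap Q (s Y))
  (hw : forall Y : Ob B, w (Q Y) ∘ τ Y = r (Q Y))
  (* the comonad C *)
  (C : Functor A A) (i : NatTrans C (FComp Q P))
  (hi : forall X : Ob A,
      IsEqualizer (i X) (fmap Q (fmap P (w X)) ∘ τ (P X)) (fmap Q (fmap P (r X))))
  (ΔC : NatTrans C (FComp C C)) (εC : NatTrans C (IdF A))
  (hCcom : IsComonad ΔC εC)
  (hΔC : forall X : Ob A,
      fmap Q (fmap P (i X)) ∘ i (C X) ∘ ΔC X = τ (P X) ∘ i X)
  (hεC : forall X : Ob A, r X ∘ εC X = w X ∘ i X)
  (* the comonad D *)
  (D : Functor B B) (j : NatTrans D (FComp P Q))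
  (hj : forall Y : Ob B,
      IsEqualizer (j Y) (z (P (Q Y)) ∘ fmap P (τ Y)) (s (P (Q Y))))
  (ΔD : NatTrans D (FComp D D)) (εD : NatTrans D (IdF B))
  (hDcom : IsComonad ΔD εD)
  (hΔD : forall Y : Ob B,
      fmap P (fmap Q (j Y)) ∘ j (D Y) ∘ ΔD Y = fmap P (τ Y) ∘ j Y)
  (hεD : forall Y : Ob B, s Y ∘ εD Y = z Y ∘ j Y)
  (* the functors Qbar and Qbar' *)
  (Qb : Functor A B) (q : NatTrans Qb (FComp P C))
  (hq : forall X : Ob A,
      IsEqualizer (q X)
        (z (P (Q (P X))) ∘ fmap P (τ (P X)) ∘ fmap P (i X))
        (s (P (Q (P X))) ∘ fmap P (i X)))
  (Qb' : Functor A B) (q' : NatTrans Qb' (FComp D P))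
  (hq' : forall X : Ob A,
      IsEqualizer (q' X)
        (fmap P (fmap Q (fmap P (w X)) ∘ τ (P X)) ∘ j (P X))
        (fmap P (fmap Q (fmap P (r X))) ∘ j (P X))) :
  exists φ : NatTrans Qb Qb',
    (forall X : Ob A, IsIso (φ X)) /\
    (forall X : Ob A, j (P X) ∘ q' X ∘ φ X = fmap P (i X) ∘ q X) /\
    exists (cb : NatTrans Qb (FComp Qb C)) (db : NatTrans Qb (FComp D Qb)),
      (forall X : Ob A, q (C X) ∘ cb X = fmap P (ΔC X) ∘ q X) /\
      (forall X : Ob A,
         fmap D (q' X ∘ φ X) ∘ db X = ΔD (P X) ∘ (q' X ∘ φ X)) /\
      IsBicomodule ΔD εD ΔC εC db cb.
Proof.
  assert (ni : forall a b (f : Hom a b), i b ∘ fmap C f = fmap Q (fmap P f) ∘ i a) by (intros; apply (naturality i)).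
  assert (nj : forall a b (f : Hom a b), j b ∘ fmap D f = fmap P (fmap Q f) ∘ j a) by (intros; apply (naturality j)).
  assert (nq : forall a b (f : Hom a b), q b ∘ fmap Qb f = fmap P (fmap C f) ∘ q a) by (intros; apply (naturality q)).
  assert (nq' : forall a b (f : Hom a b), q' b ∘ fmap Qb' f = fmap D (fmap P f) ∘ q' a) by (intros; apply (naturality q')).
  assert (nτ : forall a b (f : Hom a b), τ b ∘ fmap Q f = fmap Q (fmap P (fmap Q f)) ∘ τ a) by (intros; apply (naturality τ)).
  assert (nz : forall a b (f : Hom a b), z b ∘ fmap P (fmap Q f) = fmap S f ∘ z a) by (intros; apply (naturality z)).
  assert (ns : forall a b (f : Hom a b), s b ∘ f = fmap S f ∘ s a) by (intros; apply (naturality s)).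
  assert (nw : forall a b (f : Hom a b), w b ∘ fmap Q (fmap P f) = fmap R f ∘ w a) by (intros; apply (naturality w)).
  assert (nr : forall a b (f : Hom a b), r b ∘ f = fmap R f ∘ r a) by (intros; apply (naturality r)).
  assert (nΔC : forall a b (f : Hom a b), ΔC b ∘ fmap C f = fmap C (fmap C f) ∘ ΔC a) by (intros; apply (naturality ΔC)).
  assert (nεC : forall a b (f : Hom a b), εC b ∘ fmap C f = f ∘ εC a) by (intros; apply (naturality εC)).
  assert (nΔD : forall a b (f : Hom a b), ΔD b ∘ fmap D f = fmap D (fmap D f) ∘ ΔD a) by (intros; apply (naturality ΔD)).
  assert (nεD : forall a b (f : Hom a b), εD b ∘ fmap D f = f ∘ εD a) by (intros; apply (naturality εD)).
  assert (Hu : forall X, (z (P (Q (P X))) ∘ fmap P (τ (P X))) ∘ (fmap P (i X) ∘ q X) = s (P (Q (P X))) ∘ (fmap P (i X) ∘ q X)).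
  { intro X. destruct (hq X) as [H _]. rewrite !comp_assoc. exact H. }
  pose (u := fun X => proj1_sig (fac (hj (P X)) (Hu X))).
  assert (hu : forall X, j (P X) ∘ u X = fmap P (i X) ∘ q X) by (intro X; exact (proj2_sig (fac (hj (P X)) (Hu X)))).
  clearbody u.
  assert (Hφ : forall X, (fmap P (fmap Q (fmap P (w X)) ∘ τ (P X)) ∘ j (P X)) ∘ u X = (fmap P (fmap Q (fmap P (r X))) ∘ j (P X)) ∘ u X).
  { intro X. destruct (hi X) as [H _]. nrm. rw (hu X). rw (f_equal (fmap P) H). reflexivity. }
  pose (φc := fun X => proj1_sig (fac (hq' X) (Hφ X))).
  assert (hφ : forall X, q' X ∘ φc X = u X) by (intro X; exact (proj2_sig (fac (hq' X) (Hφ X)))).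
  clearbody φc.
  assert (Hv : forall X, fmap P (fmap Q (fmap P (w X)) ∘ τ (P X)) ∘ (j (P X) ∘ q' X) = fmap P (fmap Q (fmap P (r X))) ∘ (j (P X) ∘ q' X)).
  { intro X. destruct (hq' X) as [H _]. rewrite !comp_assoc. exact H. }
  pose (v := fun X => proj1_sig (fac (hP _ _ _ _ _ _ (hi X)) (Hv X))).
  assert (hv : forall X, fmap P (i X) ∘ v X = j (P X) ∘ q' X) by (intro X; exact (proj2_sig (fac (hP _ _ _ _ _ _ (hi X)) (Hv X)))).
  clearbody v.
  assert (Hψ : forall X, (z (P (Q (P X))) ∘ fmap P (τ (P X)) ∘ fmap P (i X)) ∘ v X = (s (P (Q (P X))) ∘ fmap P (i X)) ∘ v X).
  { intro X. destruct (hj (P X)) as [H _]. ra. rw (hv X). rw H. reflexivity. }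
  pose (ψc := fun X => proj1_sig (fac (hq X) (Hψ X))).
  assert (hψ : forall X, q X ∘ ψc X = v X) by (intro X; exact (proj2_sig (fac (hq X) (Hψ X)))).
  clearbody ψc.
  assert (iso1 : forall X, ψc X ∘ φc X = idm _).
  { intro X. apply (eq_mono (hq X)). apply (eq_mono (hP _ _ _ _ _ _ (hi X))).
    rewrite comp_id_r. nrm. rw (hψ X). rw (hv X). rw (hφ X). rw (hu X). reflexivity. }
  assert (iso2 : forall X, φc X ∘ ψc X = idm _).
  { intro X. apply (eq_mono (hq' X)). apply (eq_mono (hj (P X))).
    rewrite comp_id_r. nrm. rw (hφ X). rw (hu X). rw (hψ X). rw (hv X). reflexivity. }
  assert (natφ : forall a b (f : Hom a b), φc b ∘ fmap Qb f = fmap Qb' f ∘ φc a).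
  { intros a b f. apply (eq_mono (hq' b)). apply (eq_mono (hj (P b))). nrm.
    rw (hφ b). rw (hu b). rw (nq _ _ f). rw (f_equal (fmap P) (ni _ _ f)).
    rw (nq' _ _ f). rw (nj _ _ (fmap P f)). rw (hφ a). rw (hu a). reflexivity. }
  pose (φ := {| ntc := φc; naturality := natφ |} : NatTrans Qb Qb').
  exists φ. split; [intro X; exists (ψc X); split; [apply iso1 | apply iso2] |].
  split; [intro X; cbn; ra; rewrite hφ; apply hu |].
  assert (Hc : forall X, (z (P (Q (P (C X)))) ∘ fmap P (τ (P (C X))) ∘ fmap P (i (C X))) ∘ (fmap P (ΔC X) ∘ q X) = (s (P (Q (P (C X)))) ∘ fmap P (i (C X))) ∘ (fmap P (ΔC X) ∘ q X)).
  { intro X. apply (eq_mono (hS _ _ _ _ _ _ (hP _ _ _ _ _ _ (hQ _ _ _ _ _ _ (hP _ _ _ _ _ _ (hi X)))))). nrm.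
    rwb (nz _ _ (fmap P (fmap Q (fmap P (i X))))).
    rwb (f_equal (fmap P) (nτ _ _ (fmap P (i X)))).
    rw (f_equal (fmap P) (hΔC X)).
    rwb (f_equal (fmap P) (hτ (P X))).
    rw (nz _ _ (fmap P (τ (P X)))).
    destruct (hq X) as [H _]. rw H.
    rwb (ns _ _ (fmap P (τ (P X)))).
    rwb (ns _ _ (fmap P (fmap Q (fmap P (i X))))).
    rw (f_equal (fmap P) (hΔC X)). reflexivity. }
  pose (cbc := fun X => proj1_sig (fac (hq (C X)) (Hc X))).
  assert (hcb : forall X, q (C X) ∘ cbc X = fmap P (ΔC X) ∘ q X) by (intro X; exact (proj2_sig (fac (hq (C X)) (Hc X)))).
  clearbody cbc.
  assert (natcb : forall a b (f : Hom a b), cbc b ∘ fmap Qb f = fmap (FComp Qb C) f ∘ cbc a).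
  { intros a b f. apply (eq_mono (hq (C b))). nrm. rw (hcb b). rw (nq _ _ f). rw (f_equal (fmap P) (nΔC _ _ f)).
    rw (nq _ _ (fmap C f)). rw (hcb a). reflexivity. }
  pose (cbN := @Build_NatTrans _ _ Qb (FComp Qb C) cbc natcb).
  assert (hD : PreservesEqualizers D).
  { apply (@D_pres B D (FComp P Q) (FComp S (FComp P Q)) j (fun Y => z (P (Q Y)) ∘ fmap P (τ Y)) (fun Y => s (P (Q Y)))).
    - intros a b f. nrm. rw (f_equal (fmap P) (nτ _ _ f)). rw (nz _ _ (fmap P (fmap Q f))). reflexivity.
    - intros a b f. cb. apply ns.
    - exact hj.
    - apply comp_pres; assumption.
    - apply comp_pres; [assumption | apply comp_pres; assumption]. }
  assert (heq : forall X, IsEqualizer (u X) (fmap P (fmap Q (fmap P (w X)) ∘ τ (P X)) ∘ j (P X)) (fmap P (fmap Q (fmap P (r X))) ∘ j (P X))).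
  { intro X. rewrite <- (hφ X). apply eq_iso; [apply hq' | exists (ψc X); split; [apply iso1 | apply iso2]]. }
  assert (Hd : forall X, fmap D (fmap P (fmap Q (fmap P (w X)) ∘ τ (P X)) ∘ j (P X)) ∘ (ΔD (P X) ∘ u X) = fmap D (fmap P (fmap Q (fmap P (r X))) ∘ j (P X)) ∘ (ΔD (P X) ∘ u X)).
  { intro X. apply (eq_mono (hj (P (Q (P (R X)))))). nrm.
    rw (nj _ _ (fmap P (fmap Q (fmap P (w X))))).
    rw (nj _ _ (fmap P (τ (P X)))).
    rw (nj _ _ (fmap P (fmap Q (fmap P (r X))))).
    rw (nj _ _ (j (P X))).
    rw (hΔD (P X)).
    rw (f_equal (fmap P) (hτ (P X))).
    rwb (f_equal (fmap P) (nτ _ _ (fmap P (w X)))).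
    rwb (f_equal (fmap P) (nτ _ _ (fmap P (r X)))).
    rw (hu X). destruct (hi X) as [H _]. rw (f_equal (fmap P) H). reflexivity. }
  pose (dbc := fun X => proj1_sig (fac (hD _ _ _ _ _ _ (heq X)) (Hd X))).
  assert (hdb : forall X, fmap D (u X) ∘ dbc X = ΔD (P X) ∘ u X) by (intro X; exact (proj2_sig (fac (hD _ _ _ _ _ _ (heq X)) (Hd X)))).
  clearbody dbc.
  assert (nu : forall a b (f : Hom a b), u b ∘ fmap Qb f = fmap D (fmap P f) ∘ u a).
  { intros a b f. rewrite <- (hφ a), <- (hφ b). nrm. rw (natφ _ _ f). rw (nq' _ _ f). reflexivity. }
  assert (natdb : forall a b (f : Hom a b), dbc b ∘ fmap Qb f = fmap (FComp D Qb) f ∘ dbc a).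
  { intros a b f. apply (eq_mono (hD _ _ _ _ _ _ (heq b))). nrm. rw (hdb b). rw (nu _ _ f).
    rw (nΔD _ _ (fmap P f)). rw (f_equal (fmap D) (nu _ _ f)). rw (hdb a). reflexivity. }
  pose (dbN := @Build_NatTrans _ _ Qb (FComp D Qb) dbc natdb).
  exists cbN, dbN.
  destruct hCcom as [c1 [c2 c3]]. destruct hDcom as [d1 [d2 d3]].
  split; [intro X; cb; exact (hcb X) |].
  split; [intro X; cbn; rewrite hφ; exact (hdb X) |].
  split; [split | split; [split|]].
  - intro X. cbn. apply (eq_mono (heq X)). nrm. rwb (nεD _ _ (u X)). rw (hdb X). rw (d1 (P X)). reflexivity.
  - intro X. cbn. apply (eq_mono (hD _ _ _ _ _ _ (hD _ _ _ _ _ _ (heq X)))). nrm.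
    rw (f_equal (fmap D) (hdb X)). rw (hdb X). rwb (nΔD _ _ (u X)). rw (hdb X). rw (d3 (P X)). reflexivity.
  - intro X. cbn. apply (eq_mono (hq X)). nrm. rw (nq _ _ (εC X)). rw (hcb X). rw (f_equal (fmap P) (c2 X)). reflexivity.
  - intro X. cbn. apply (eq_mono (hq (C (C X)))). nrm. rw (hcb (C X)). rw (hcb X). rw (nq _ _ (ΔC X)). rw (hcb X).
    rw (f_equal (fmap P) (c3 X)). reflexivity.
  - intro X. cbn.
    apply (eq_mono (hD _ _ _ _ _ _ (heq (C X)))).
    apply (eq_mono (hD _ _ _ _ _ _ (hj (P (C X))))).
    apply (eq_mono (hj (P (Q (P (C X)))))).
    apply (eq_mono (hP _ _ _ _ _ _ (hQ _ _ _ _ _ _ (hP _ _ _ _ _ _ (hQ _ _ _ _ _ _ (hP _ _ _ _ _ _ (hi X))))))).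
    nrm.
    rw (hdb (C X)). rw (nj _ _ (j (P (C X)))). rw (hΔD (P (C X))). rw (hu (C X)). rw (hcb X).
    rwb (f_equal (fmap P) (nτ _ _ (fmap P (i X)))). rw (f_equal (fmap P) (hΔC X)).
    rwb (f_equal (fmap P) (hτ (P X))).
    rw (f_equal (fmap D) (hu (C X))). rw (f_equal (fmap D) (hcb X)).
    rwb (nj _ _ (fmap P (fmap Q (fmap P (i X))))).
    rw (f_equal (fmap D) (f_equal (fmap P) (hΔC X))).
    rwb (f_equal (fmap D) (hu X)). rw (hdb X).
    rw (nj _ _ (fmap P (τ (P X)))). rw (nj _ _ (j (P X))). rw (hΔD (P X)). rw (hu X). reflexivity.
Qed.
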